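(* In the setting of the context, assume $\mathbf{A}$ and $\tilde{\mathbf{A}}$ are invertible. Then the coarse-grid correction of PFASST satisfies the approximation property for large CFL number: there exist $\mu^*>0$ and a constant $c>0$ independent of $\mu$ such that for all $\mu\ge\mu^*$, $$\big\|\mathbf{C}^{-1}-\mathbf{T}_C^F\tilde{\mathbf{P}}^{-1}\mathbf{T}_F^C\big\|\le\frac{c}{\mu}.$$
   Context: Fix positive integers $L,M,N$ and coarse sizes $\tilde M\le M$, $\tilde N\le N$. Let $\mathbf{Q}=(q_{m,j})\in\mathbb{R}^{M\times M}$ with $q_{m,j}=\int_0^{\tau_m}\ell_j(s)\,ds$ be the collocation matrix for the (right) Gauss–Radau nodes $0<\tau_1<\dots<\tau_M=1$ on $[0,1]$ ($\ell_j$ Lagrange basis polynomials). Let $\tilde{\mathbf{Q}}_\Delta\in\mathbb{R}^{\tilde M\times\tilde M}$ be the lower-triangular weight matrix of a simpler quadrature rule on the coarse nodes; as a standing assumption of the stiff-limit analysis, $\tilde{\mathbf{Q}}_\Delta$ is invertible. Let $\mathbf{A}\in\mathbb{C}^{N\times N}$, $\tilde{\mathbf{A}}\in\mathbb{C}^{\tilde N\times\tilde N}$, $\mu>0$. Let $\mathbf{N}_M$ and $\tilde{\mathbf{N}}_{\tilde M}$ be the $M\times M$ and $\tilde M\times\tilde M$ matrices with ones in the last column and zeros elsewhere, $\mathbf{H}=\mathbf{N}_M\otimes\mathbf{I}_N$, $\tilde{\mathbf{H}}=\tilde{\mathbf{N}}_{\tilde M}\otimes\mathbf{I}_{\tilde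 N}$, $\mathbf{E}\in\mathbb{R}^{L\times L}$ with ones on the first subdiagonal and zeros elsewhere. $\mathbf{C}=\mathbf{I}_{LMN}-\mu\,\mathbf{I}_L\otimes\mathbf{Q}\otimes\mathbf{A}-\mathbf{E}\otimes\mathbf{H}$ and $\tilde{\mathbf{P}}=\mathbf{I}_{L\tilde M\tilde N}-\mu\,\mathbf{I}_L\otimes\tilde{\mathbf{Q}}_\Delta\otimes\tilde{\mathbf{A}}-\mathbf{E}\otimes\tilde{\mathbf{H}}$. Restriction $\mathbf{T}_F^C=\mathbf{I}_L\otimes\mathbf{T}_{F,Q}^C\otimes\mathbf{T}_{F,A}^C\in\mathbb{R}^{L\tilde M\tilde N\times LMN}$ and interpolation $\mathbf{T}_C^F=\mathbf{I}_L\otimes\mathbf{T}_{C,Q}^F\otimes\mathbf{T}_{C,A}^F\in\mathbb{R}^{LMN\times L\tilde M\tilde N}$, with $(\mathbf{E}\otimes\tilde{\mathbf{H}})\mathbf{T}_F^C=\mathbf{T}_F^C(\mathbf{E}\otimes\mathbf{H})$. $\|\cdot\|$ is any induced matrix norm. *)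

(* Defs.v *)
From HB Require Import structures.
From mathcomp Require Import all_boot all_order all_algebra.
From mathcomp Require Import all_classical all_reals all_analysis.
From mathcomp.real_closed Require Export complex mxtens.

Set Implicit Arguments.
Unset Strict Implicit.
Unset Printing Implicit Defensive.

Import Order.TTheory GRing.Theory Num.Theory.
Local Open Scope ring_scope.

Section Defs.
Variable R : realType.
Local Notation C := (R[i]).

(* Legendre polynomials on [-1,1]: pair (P_n, P_{n+1}), via Bonnet's recursion
   (n+2) P_{n+2} = (2n+3) X P_{n+1} - (n+1) P_n. *)
Fixpoint legendre_pair (n : nat) : {poly R} * {poly R} :=
  match n with
  | 0 => (1, 'X)
  | n'.+1 =>
      let (p0, p1) := legendre_pair n' in
      (p1, ((2 * n' + 3)%:R / (n' + 2)%:R) *: ('X * p1)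
            - ((n' + 1)%:R / (n' + 2)%:R) *: p0)
  end.

Definition legendre (n : nat) : {poly R} := (legendre_pair n).1.

(* Right Gauss-Radau polynomial on [-1,1] (its M roots include x = 1). *)
Definition radau_poly (M : nat) : {poly R} := legendre M - legendre M.-1.

Definition right_radau_nodes (M : nat) (tau : 'I_M -> R) : Prop :=
  (forall i j : 'I_M, (i < j)%N -> tau i < tau j) /\
  (forall m : 'I_M, root (radau_poly M) (2 * tau m - 1)).

Definition lagrange_basis (M : nat) (tau : 'I_M -> R) (j : 'I_M) (s : R) : R :=
  \prod_(k < M | k != j) ((s - tau k) / (tau j - tau k)).

Definition colloc_Q (M : nat) (tau : 'I_M -> R) : 'M[R]_M :=
  \matrix_(m, j) Rintegral (@lebesgue_measure R) `[0, tau m]%classic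
                           (lagrange_basis tau j).

Definition cmx (m n : nat) (X : 'M[R]_(m, n)) : 'M[C]_(m, n) :=
  map_mx (real_complex R) X.

Definition lastcol_mx (n : nat) : 'M[R]_n :=
  \matrix_(i, j) (nat_of_ord j == n.-1)%:R.

Definition subdiag_mx (n : nat) : 'M[R]_n :=
  \matrix_(i, j) (nat_of_ord i == (nat_of_ord j).+1)%:R.

(* E (x) H = E (x) (N_M (x) I_N), written with left-nested Kronecker products
   (E (x) N_M) (x) I_N, which is the same matrix. *)
Definition EH (L M N : nat) : 'M[C]_(L * M * N) :=
  (cmx (subdiag_mx L) *t cmx (lastcol_mx M)) *t (1%:M : 'M[C]_N).

Definition C_op (L M N : nat) (mu : R) (Q : 'M[R]_M) (A : 'M[C]_N)
  : 'M[C]_(L * M * N) :=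
  1%:M - (real_complex R mu) *: ((cmx (1%:M : 'M[R]_L) *t cmx Q) *t A)
       - EH L M N.

Definition transfer (L m1 m2 n1 n2 : nat) (TQ : 'M[R]_(m1, m2))
  (TA : 'M[R]_(n1, n2)) : 'M[C]_(L * m1 * n1, L * m2 * n2) :=
  (cmx (1%:M : 'M[R]_L) *t cmx TQ) *t cmx TA.

Definition is_vnorm (n : nat) (nu : 'cV[C]_n -> R) : Prop :=
  [/\ (forall x, 0 <= nu x),
      (forall x, nu x = 0 -> x = 0),
      (forall (a : C) x, nu (a *: x) = Normc.normc a * nu x) &
      (forall x y, nu (x + y) <= nu x + nu y)].

Definition induced_norm (n : nat) (nu : 'cV[C]_n -> R) (X : 'M[C]_n) : R :=
  sup [set nu (X *m x) / nu x | x in [set x : 'cV[C]_n | x != 0]]%classic.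

End Defs.

(* Main.v *)
Require Import Defs.
From HB Require Import structures.
From mathcomp Require Import all_boot all_order all_algebra.
From mathcomp Require Import all_classical all_reals all_analysis.
From mathcomp.real_closed Require Import complex mxtens.
From mathcomp Require Import ring lra zify.

Import Order.TTheory GRing.Theory Num.Theory.
Import numFieldNormedType.Exports.
Local Open Scope ring_scope.
Set Implicit Arguments.
Unset Strict Implicit.
Unset Printing Implicit Defensive.
Local Notation re := complex.Re.
Local Notation im := complex.Im.

Section Semi.
Local Open Scope complex_scope.
Variable R : realType.
Local Notation C := (R[i]).

Definition ab (z : C) : R := `|re z| + `|im z|.

Lemma ab_ge0 z : 0 <= ab z.
Proof. by rewrite /ab addr_ge0. Qed.

Lemma abD x y : ab (x + y) <= ab x + ab y.
Proof.
case: x => a b; case: y => c d; rewrite /ab /=.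
apply: (le_trans (lerD (ler_normD a c) (ler_normD b d))).
by rewrite !addrA lerD2r addrAC.
Qed.

Lemma abN x : ab (- x) = ab x.
Proof. by case: x => a b; rewrite /ab /= !normrN. Qed.

Lemma abM x y : ab (x * y) <= ab x * ab y.
Proof.
case: x => a b; case: y => c d; rewrite /ab /=.
rewrite mulrDr !mulrDl -!normrM.
apply: le_trans (lerD (ler_normB _ _) (ler_normD _ _)) _.
lra.
Qed.

Lemma ab_eq0 z : ab z = 0 -> z = 0.
Proof.
case: z => a b; rewrite /ab /= => /eqP; rewrite paddr_eq0 ?normr_ge0 //.
by rewrite !normr_eq0 => /andP[/eqP -> /eqP ->].
Qed.

Lemma abZ (r : R) z : ab (r%:C * z) = `|r| * ab z.
Proof. by case: z => a b; rewrite /ab /= !mul0r !subr0 !addr0 !normrM mulrDr. Qed.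

Lemma ab0 : ab 0 = 0.
Proof. by rewrite /ab /= normr0 addr0. Qed.

Lemma normc_le_ab z : Normc.normc z <= ab z.
Proof.
case: z => a b; rewrite /ab /=.
rewrite -ler_sqr ?nnegrE ?sqrtr_ge0 ?addr_ge0 // sqr_sqrtr ?addr_ge0 ?sqr_ge0 //.
rewrite sqrrD !real_normK ?num_real //.
have : 0 <= `|a| * `|b| *+ 2 by rewrite mulrn_wge0 // mulr_ge0.
lra.
Qed.

Lemma normcR (r : R) : Normc.normc (r%:C) = `|r|.
Proof. by rewrite /= expr0n /= addr0 sqrtr_sqr. Qed.

Definition sv n (x : 'cV[C]_n) : R := \sum_i ab (x i 0).
Definition mn m n (Z : 'M[C]_(m, n)) : R := \sum_i \sum_j ab (Z i j).

Lemma sv_ge0 n (x : 'cV[C]_n) : 0 <= sv x.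
Proof. by apply: sumr_ge0 => i _; apply: ab_ge0. Qed.

Lemma mn_ge0 m n (Z : 'M[C]_(m, n)) : 0 <= mn Z.
Proof. by apply: sumr_ge0 => i _; apply: sumr_ge0 => j _; apply: ab_ge0. Qed.

Lemma svD n (x y : 'cV[C]_n) : sv (x + y) <= sv x + sv y.
Proof.
rewrite /sv -big_split /=; apply: ler_sum => i _; rewrite mxE; exact: abD.
Qed.

Lemma svN n (x : 'cV[C]_n) : sv (- x) = sv x.
Proof. by apply: eq_bigr => i _; rewrite mxE abN. Qed.

Lemma svB n (x y : 'cV[C]_n) : sv (x - y) <= sv x + sv y.
Proof. by rewrite -(svN y) svD. Qed.

Lemma svZ n (r : R) (x : 'cV[C]_n) : sv (r%:C *: x) = `|r| * sv x.
Proof. by rewrite /sv mulr_sumr; apply: eq_bigr => i _; rewrite mxE abZ. Qed.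

Lemma sv0 n : sv (0 : 'cV[C]_n) = 0.
Proof.
have := svZ 0 (0 : 'cV[C]_n); rewrite normr0 mul0r => <-.
by rewrite scaler0.
Qed.

Lemma sv_eq0 n (x : 'cV[C]_n) : sv x = 0 -> x = 0.
Proof.
move=> /eqP; rewrite psumr_eq0; last by move=> i _; apply: ab_ge0.
move=> /allP H; apply/matrixP => i j; rewrite ord1 mxE.
by apply: ab_eq0; apply/eqP; apply: H; rewrite mem_index_enum.
Qed.

Lemma ab_le_sv n (x : 'cV[C]_n) i : ab (x i 0) <= sv x.
Proof.
rewrite /sv (bigD1 i) //= ler_wpDr //.
by apply: sumr_ge0 => k _; apply: ab_ge0.
Qed.

Lemma ab_sum (I : Type) (r : seq I) (F : I -> C) :
  ab (\sum_(i <- r) F i) <= \sum_(i <- r) ab (F i).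
Proof.
elim: r => [|a r IH]; first by rewrite !big_nil ab0.
by rewrite !big_cons; apply: le_trans (abD _ _) _; rewrite lerD2l.
Qed.

Lemma sv_mul m n (Z : 'M[C]_(m, n)) (x : 'cV[C]_n) : sv (Z *m x) <= mn Z * sv x.
Proof.
rewrite /sv /mn mulr_suml; apply: ler_sum => i _; rewrite mxE.
apply: le_trans (ab_sum _ _) _.
rewrite mulr_suml; apply: ler_sum => j _.
apply: le_trans (abM _ _) _; apply: ler_wpM2l; first exact: ab_ge0.
exact: ab_le_sv.
Qed.

Lemma unit_of_inj n (A : 'M[C]_n) :
  (forall y : 'cV_n, A *m y = 0 -> y = 0) -> A \in unitmx.
Proof.
move=> H; rewrite unitmxE unitfE -det_tr; apply/negP => /det0P [v v0 vA].
have : A *m v^T = 0 by rewrite -[A]trmxK -trmx_mul vA trmx0.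
move=> /H vT0; move: v0; by rewrite -[v]trmxK vT0 trmx0 eqxx.
Qed.

Lemma stiff_key n (K B : 'M[C]_n) (mu : R) (y : 'cV_n) : K \in unitmx ->
  0 < mu ->
  mu * sv y <= mn (invmx K) * (mn B * sv y + sv ((B - mu%:C *: K) *m y)).
Proof.
move=> uK mu0.
have key : mu%:C *: y = invmx K *m (B *m y - (B - mu%:C *: K) *m y).
  rewrite mulmxBl opprB addrCA subrr addr0 -scalemxAl -scalemxAr mulmxA.
  by rewrite mulVmx // mul1mx.
have := svZ mu y; rewrite key gtr0_norm // => <-.
apply: le_trans (sv_mul _ _) _; apply: ler_wpM2l; first exact: mn_ge0.
by apply: le_trans (svB _ _) _; rewrite lerD2r sv_mul.
Qed.

Lemma stiff n (K B : 'M[C]_n) : K \in unitmx ->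
  exists mu0 c : R, 0 < mu0 /\ 0 < c /\ forall mu, mu0 <= mu ->
    (B - mu%:C *: K) \in unitmx /\
    forall x, sv (invmx (B - mu%:C *: K) *m x) <= c / mu * sv x.
Proof.
move=> uK; set al := mn (invmx K); set be := mn B.
have al0 : 0 <= al by exact: mn_ge0.
have be0 : 0 <= be by exact: mn_ge0.
have ab0' : 0 <= al * be by rewrite mulr_ge0.
exists (2 * (al * be) + 1), (2 * al + 1); split; first by lra.
split; first by lra.
move=> mu hmu.
have mu0 : 0 < mu by lra.
have main : forall y, mu * sv y <= (2 * al + 1) * sv ((B - mu%:C *: K) *m y).
  move=> y; have := stiff_key B y uK mu0; rewrite -/al -/be.
  have s0 := sv_ge0 y; have t0 := sv_ge0 ((B - mu%:C *: K) *m y).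
  move: s0 t0; set s := sv y; set t := sv _ => s0 t0.
  have h1 : 0 <= (mu - (2 * (al * be) + 1)) * s by rewrite mulr_ge0 // subr_ge0.
  have h2 : 0 <= al * t by rewrite mulr_ge0.
  move=> h.
  have e1 : al * (be * s + t) = al * be * s + al * t by ring.
  have e2 : (mu - (2 * (al * be) + 1)) * s = mu * s - 2 * (al * be * s) - s by ring.
  have e3 : (2 * al + 1) * t = 2 * (al * t) + t by ring.
  rewrite e3; rewrite e1 in h; rewrite e2 in h1.
  lra.
split.
  apply: unit_of_inj => y Hy; apply: sv_eq0; apply/eqP; rewrite eq_le sv_ge0 andbT.
  have := main y; rewrite Hy sv0 mulr0 => h.
  by rewrite -(pmulr_rle0 _ mu0).
move=> x; have := main (invmx (B - mu%:C *: K) *m x).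
rewrite mulKVmx //; last first.
  apply: unit_of_inj => y Hy; apply: sv_eq0; apply/eqP; rewrite eq_le sv_ge0 andbT.
  have := main y; rewrite Hy sv0 mulr0 => h.
  by rewrite -(pmulr_rle0 _ mu0).
move=> h; rewrite mulrAC ler_pdivlMr //; by rewrite mulrC.
Qed.
End Semi.


Section Lip.
Local Open Scope classical_set_scope.
Lemma lipc (R : realType) (m : nat) (f : 'rV[R]_m -> R) (k : R) : 0 <= k ->
  (forall d (v w : 'rV[R]_m), 0 < d -> (forall i j, `|v i j - w i j| < d) ->
     `|f v - f w| <= k * d) -> continuous f.
Proof.
move=> k0 lip x P HP.
have [e e0 He] := (nbhs_ballP _ _).1 HP.
have e0' : 0 < e by [].
have d0 : 0 < e / (k + 1) by rewrite divr_gt0 //; lra.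
exists (fun i j => ball (x i j) (e / (k + 1))).
  by move=> i j; apply: nbhsx_ballx.
move=> y Hy; apply: He.
have Hy' : forall i j, `|x i j - y i j| < e / (k + 1).
  by move=> i j; have := Hy i j; rewrite /ball /=.
have := lip _ x y d0 Hy'.
rewrite /ball /=.
have : k * (e / (k + 1)) < e.
  rewrite mulrA ltr_pdivrMr; last by lra.
  nra.
lra.
Qed.

End Lip.

Lemma normc_ge0 (R : realType) (z : R[i]) : 0 <= Normc.normc z.
Proof. by case: z => a b; exact: sqrtr_ge0. Qed.

Section Equiv.
Local Open Scope complex_scope.
Local Open Scope classical_set_scope.
Variable R : realType.
Local Notation C := (R[i]).
Variable n : nat.
Variable nu : 'cV[C]_n -> R.
Hypothesis Hnu : is_vnorm nu.

Lemma nu_ge0 x : 0 <= nu x. Proof. by case: Hnu. Qed.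
Lemma nuD x y : nu (x + y) <= nu x + nu y. Proof. by case: Hnu. Qed.
Lemma nuZ a x : nu (a *: x) = Normc.normc a * nu x. Proof. by case: Hnu. Qed.
Lemma nu_eq0 x : nu x = 0 -> x = 0. Proof. by case: Hnu => _ H _ _; apply: H. Qed.

Lemma nu0 : nu 0 = 0.
Proof. by rewrite -(scale0r (0 : 'cV[C]_n)) nuZ Normc.normc0 mul0r. Qed.

Lemma nuN x : nu (- x) = nu x.
Proof. by rewrite -scaleN1r nuZ normcN Normc.normc1 mul1r. Qed.

Lemma nu_sum (I : Type) (r : seq I) (F : I -> 'cV[C]_n) :
  nu (\sum_(i <- r) F i) <= \sum_(i <- r) nu (F i).
Proof.
elim: r => [|a r IH]; first by rewrite !big_nil nu0.
by rewrite !big_cons; apply: le_trans (nuD _ _) _; rewrite lerD2l.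
Qed.

Lemma nu_upper : exists2 c1 : R, 0 < c1 & forall x, nu x <= c1 * sv x.
Proof.
set E := \sum_i nu (delta_mx i (0 : 'I_1) : 'cV[C]_n).
have E0 : 0 <= E by apply: sumr_ge0 => i _; exact: nu_ge0.
exists (E + 1); first by lra.
move=> x.
have Hx : x = \sum_i x i 0 *: delta_mx i 0.
  rewrite {1}(matrix_sum_delta x); apply: eq_bigr => i _.
  by rewrite big_ord1.
rewrite {1}Hx; apply: le_trans (nu_sum _ _) _.
rewrite /sv mulr_sumr; apply: ler_sum => i _.
rewrite nuZ mulrC; apply: ler_pM; [exact: nu_ge0 | exact: normc_ge0 | |]; last first.
  exact: normc_le_ab.
have : nu (delta_mx i 0) <= E.
  rewrite /E (bigD1 i) //= ler_wpDr //; by apply: sumr_ge0 => k _; exact: nu_ge0.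
by lra.
Qed.

Definition psi (v : 'rV[R]_(n + n)) : 'cV[C]_n :=
  \col_i Complex (v 0 (lshift n i)) (v 0 (rshift n i)).
Definition phi (x : 'cV[C]_n) : 'rV[R]_(n + n) :=
  row_mx (\row_i re (x i 0)) (\row_i im (x i 0)).

Lemma psi_phi x : psi (phi x) = x.
Proof.
apply/matrixP => i j; rewrite ord1 mxE /phi row_mxEl row_mxEr !mxE.
by case: (x i 0).
Qed.

Lemma psiB v w : psi (v - w) = psi v - psi w.
Proof. by apply/matrixP => i j; rewrite !mxE. Qed.

Lemma psiZ (r : R) v : psi (r *: v) = r%:C *: psi v.
Proof.
apply/matrixP => i j; rewrite !mxE /=.
by rewrite /GRing.mul /= !mul0r subr0 addr0.
Qed.

Lemma entry_le (v : 'rV[R]_(n + n)) j : `|v 0 j| <= `|v|.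
Proof.
rewrite [leRHS]/Num.norm /= mx_normrE; apply/bigmax_geP; right => /=.
by exists (0, j).
Qed.

Lemma sv_psi v : sv (psi v) <= (n%:R * 2) * `|v|.
Proof.
have H : forall i, ab (psi v i 0) <= 2 * `|v|.
  move=> i; rewrite /ab !mxE /=.
  have := entry_le v (lshift n i); have := entry_le v (rshift n i); lra.
apply: le_trans (ler_sum _ (fun i _ => H i)) _.
rewrite sumr_const card_ord -mulr_natl; lra.
Qed.

Lemma sv_psi_d (u : 'rV[R]_(n + n)) d :
  (forall i j, `|u i j| < d) -> sv (psi u) <= (n%:R * 2) * d.
Proof.
move=> Hu.
have H : forall i, ab (psi u i 0) <= 2 * d.
  move=> i; rewrite /ab !mxE /=.
  have := Hu 0 (lshift n i); have := Hu 0 (rshift n i); lra.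
apply: le_trans (ler_sum _ (fun i _ => H i)) _.
rewrite sumr_const card_ord -mulr_natl; lra.
Qed.

Lemma cont_f : continuous (fun v : 'rV[R]_(n + n) => nu (psi v)).
Proof.
have [c1 c10 Hc1] := nu_upper.
set k := c1 * (n%:R * 2).
have k0 : 0 <= k by rewrite mulr_ge0 // ?ltW // mulr_ge0.
apply: (lipc k0) => d v w d0 Hd.
have h1 : nu (psi v - psi w) <= k * d.
  rewrite -psiB; apply: le_trans (Hc1 _) _; rewrite /k -mulrA.
  apply: ler_wpM2l; first exact: ltW.
  apply: (@sv_psi_d (v - w) d) => i j; rewrite !mxE; exact: Hd.
have h2 : nu (psi v) <= nu (psi v - psi w) + nu (psi w).
  by rewrite -{1}(subrK (psi w) (psi v)) nuD.
have h3 : nu (psi w) <= nu (psi v - psi w) + nu (psi v).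
  by rewrite -[nu (psi v - psi w)]nuN opprB -{1}(subrK (psi v) (psi w)) nuD.
rewrite ler_norml; apply/andP; split; lra.
Qed.

Lemma psi0 : psi 0 = 0.
Proof. by apply/matrixP => i j; rewrite !mxE. Qed.

Lemma psi_inj0 v : psi v = 0 -> v = 0.
Proof.
move=> H; apply/matrixP => i j; rewrite ord1 [RHS]mxE.
rewrite -(splitK j); case: (fintype.split j) => k /=.
  by have := congr1 (fun z : 'cV[C]_n => complex.Re (z k 0)) H; rewrite !mxE.
by have := congr1 (fun z : 'cV[C]_n => complex.Im (z k 0)) H; rewrite !mxE.
Qed.

Lemma nu_lower : exists2 c2 : R, 0 < c2 & forall x, sv x <= c2 * nu x.
Proof.
have [n0|npos] := eqVneq n 0%N.
  exists 1 => // x; rewrite /sv big1 ?mul1r ?nu_ge0 // => i _.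
  by move: (ltn_ord i); rewrite {2}n0.
set A := [set v : 'rV[R]_(n + n) | `|v| = 1].
have A0 : A !=set0.
  set w := const_mx 1 : 'rV[R]_(n + n).
  have w0 : w != 0.
    apply/eqP => /matrixP /(_ 0 (lshift n (Ordinal (n := n) (m := 0) (ltac:(by rewrite lt0n))))).
    by rewrite !mxE => /eqP; rewrite oner_eq0.
  exists (`|w|^-1 *: w); rewrite /A /= normrZ normfV normr_id mulVf //.
  by rewrite normr_eq0.
have cA : compact A.
  apply: bounded_closed_compact.
    exists 1; split => // M M1 v Av; rewrite /= Av; exact: ltW.
  have -> : A = (fun v : 'rV[R]_(n + n) => `|v|) @^-1` [set 1] by [].
  apply: preimage_closed; last exact: closed_eq.
  by move=> x _; exact: norm_continuous.
have [c cA' minc] := EVT_min_rV A0 cA (continuous_subspaceT cont_f).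
have c1 : `|c| = 1 by move: cA'; rewrite inE.
set del := nu (psi c).
have del0 : 0 < del.
  rewrite lt_def nu_ge0 andbT; apply/eqP => /nu_eq0 /psi_inj0 c0.
  by move: c1; rewrite c0 normr0 => /eqP; rewrite eq_sym oner_eq0.
exists ((n%:R * 2) / del + 1); first by rewrite ltr_pwDr // divr_ge0 // ?ltW // mulr_ge0.
move=> x.
have [->|x0] := eqVneq x 0.
  by rewrite sv0 nu0 mulr0.
set v := phi x; set m := `|v|.
have v0 : v != 0 by apply: contra x0 => /eqP v0; rewrite -(psi_phi x) -/v v0 psi0.
have m0 : 0 < m by rewrite normr_gt0.
have tA : (m^-1 *: v) \in A.
  by rewrite inE /A /= normrZ normfV normr_id mulVf // gt_eqF.
have h := minc _ tA.
rewrite psiZ nuZ normcR /v psi_phi -/v ger0_norm in h; last by rewrite invr_ge0 ltW.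
have h2 : del * m <= nu x.
  by have := ler_wpM2r (ltW m0) h; rewrite mulrAC mulVf ?mul1r // gt_eqF.
have h3 : sv x <= (n%:R * 2) * m by rewrite -(psi_phi x) sv_psi.
have h4 : (n%:R * 2) * m <= (n%:R * 2) / del * nu x.
  rewrite -[X in _ <= X]mulrA; apply: ler_wpM2l; first by rewrite mulr_ge0.
  by rewrite mulrC ler_pdivlMr // mulrC.
apply: le_trans h3 _; apply: le_trans h4 _.
by rewrite ler_wpM2r ?nu_ge0 // lerDl.
Qed.

End Equiv.

Section Leg.
Variable R : realType.

Lemma leg_bound (x : R) : x <= -1 -> forall n,
  1 <= (-1) ^+ n * (legendre_pair R n).1.[x] <= (-1) ^+ n.+1 * (legendre_pair R n).2.[x].
Proof.
move=> hx; elim => [|n IH].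
  rewrite /= !hornerE expr1; apply/andP; split => //; lra.
rewrite /=; move: IH; case: (legendre_pair R n) => p0 p1 /=.
set s := (-1) ^+ n.
have e1 : (-1) ^+ n.+1 = - s :> R by rewrite exprS mulN1r.
have e2 : (-1) ^+ n.+2 = s :> R by rewrite !exprS !mulN1r opprK.
rewrite e1 e2 !hornerE.
set a := (2 * n + 3)%:R / (n + 2)%:R : R.
set b := (n + 1)%:R / (n + 2)%:R : R.
have n20 : (n + 2)%:R != 0 :> R by rewrite pnatr_eq0 addn2.
have hab : a = 1 + b.
  move: n20; rewrite /a /b !natrD => n20.
  by field.
have hb : 0 <= b by rewrite /b divr_ge0.
move=> /andP [h1 h2]; apply/andP; split; first exact: le_trans h1 h2.
set u := s * p0.[x]; set w := - s * p1.[x].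
rewrite -subr_ge0; set T := (X in 0 <= X).
have -> : T = (1 + b) * (- x - 1) * w + b * (w - u).
  have -> : T = s * (a * x * p1.[x] - b * p0.[x]) - w by [].
  by rewrite /w /u hab; ring.
rewrite addr_ge0 // mulr_ge0 //.
- by rewrite mulr_ge0 //; lra.
- by rewrite /w; lra.
- by rewrite /w /u; lra.
Qed.

Lemma radau_neq0 (M : nat) (x : R) : (0 < M)%N -> x <= -1 -> (radau_poly R M).[x] != 0.
Proof.
case: M => // k _ hx; rewrite /radau_poly /legendre /=.
have := leg_bound hx k; case: (legendre_pair R k) => p0 p1 /=.
move=> /andP [h1 h2]; rewrite hornerD hornerN.
apply/eqP => h.
have : (-1) ^+ k * p1.[x] - (-1) ^+ k * p0.[x] = 0.
  by rewrite -mulrBr h mulr0.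
move: h2; rewrite exprS mulN1r mulNr.
lra.
Qed.

Lemma radau_pos (M : nat) (tau : 'I_M -> R) : right_radau_nodes tau -> forall m, 0 < tau m.
Proof.
move=> [_ Hr] m; have /(_ m) := Hr; rewrite /root.
have M0 : (0 < M)%N by case: m => m' /= h; lia.
rewrite ltNge; apply: contraL => hle.
apply: radau_neq0 => //; lra.
Qed.

End Leg.

Section Colloc.
Variable R : realType.
Local Notation mu := (@lebesgue_measure R).

Definition prim (p : {poly R}) : {poly R} :=
  \poly_(i < (size p).+1) (if i is j.+1 then p`_j / j.+1%:R else 0).

Lemma deriv_prim p : (prim p)^`() = p.
Proof.
apply/polyP => i; rewrite coef_deriv coef_poly ltnS.
case: ltnP => hi.
  by rewrite -[LHS]mulr_natr divfK // pnatr_eq0.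
by rewrite mul0rn nth_default.
Qed.

Lemma prim0 p : (prim p).[0] = 0.
Proof. by rewrite horner_coef0 coef_poly. Qed.

Lemma size_prim p : (size (prim p) <= (size p).+1)%N.
Proof. exact: size_poly. Qed.

Lemma int_poly (q : {poly R}) (t : R) : 0 < t ->
  Rintegral mu `[0, t]%classic (horner q) = (prim q).[t] - (prim q).[0].
Proof.
move=> t0; rewrite /Rintegral (@continuous_FTC2 _ _ (horner (prim q))) //.
- exact/continuous_subspaceT/continuous_horner.
- split.
  + by move=> x _; exact: derivable_horner.
  + by apply: cvg_at_right_filter; exact: continuous_horner.
  + by apply: cvg_at_left_filter; exact: continuous_horner.
- by move=> x _; rewrite -derivE deriv_prim.
Qed.

Variable M : nat.
Variable tau : 'I_M -> R.

Definition lpoly (j : 'I_M) : {poly R} :=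
  \prod_(k < M | k != j) ((tau j - tau k)^-1 *: ('X - (tau k)%:P)).

Lemma lpolyE j s : (lpoly j).[s] = lagrange_basis tau j s.
Proof.
rewrite /lpoly horner_prod; apply: eq_bigr => k _.
by rewrite hornerZ hornerXsubC mulrC.
Qed.

Lemma size_lpoly j : (size (lpoly j) <= M)%N.
Proof.
apply: leq_trans (size_poly_prod_leq _ _) _.
have h : (\sum_(k < M | k != j) size ((tau j - tau k)^-1 *: ('X - (tau k)%:P)) <=
          \sum_(k < M | k != j) 2)%N.
  apply: leq_sum => k _; apply: leq_trans (size_scale_leq _ _) _.
  by rewrite size_XsubC.
rewrite sum_nat_const in h.
have hc : #|[pred k : 'I_M | k != j]| = M.-1.
  by have := cardC1 j; rewrite card_ord.
rewrite hc in h *.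
have h2 : forall a : nat, (a <= M.-1 * 2)%N -> (a.+1 - M.-1 <= M)%N.
  by move=> a; have := ltn_ord j; lia.
exact: h2 h.
Qed.

Hypothesis Htau : right_radau_nodes tau.

Lemma tau_inj : injective tau.
Proof.
move=> i j e; move: Htau => [H _].
have [h|h|h] := ltngtP i j.
- by have := H _ _ h; rewrite e ltxx.
- by have := H _ _ h; rewrite e ltxx.
- exact: val_inj.
Qed.

Lemma lag_delta i j : lagrange_basis tau j (tau i) = (i == j)%:R.
Proof.
rewrite /lagrange_basis; case: eqP => [->|/eqP ij].
  apply: big1 => k kj; rewrite divff // subr_eq0; apply/eqP => /tau_inj e.
  by move: kj; rewrite e eqxx.
by rewrite (bigD1 i) //= subrr mul0r mul0r.
Qed.

Lemma colloc_entry m j : colloc_Q tau m j = (prim (lpoly j)).[tau m].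
Proof.
rewrite /colloc_Q mxE.
have -> : lagrange_basis tau j = horner (lpoly j) by apply/funext => s; rewrite lpolyE.
by rewrite int_poly ?prim0 ?subr0 //; exact: radau_pos.
Qed.

Lemma colloc_unit : colloc_Q tau \in unitmx.
Proof.
rewrite unitmxE unitfE -det_tr; apply/negP => /det0P [v v0 vQ].
have hm : forall m, \sum_j v 0 j * colloc_Q tau m j = 0.
  move=> m; transitivity ((v *m (colloc_Q tau)^T) 0 m); last by rewrite vQ mxE.
  rewrite mxE; apply: eq_big => // j _; by rewrite [X in _ = _ * X]mxE.
set P := \sum_j v 0 j *: prim (lpoly j).
have P0 : P = 0.
  apply/eqP; apply/negPn/negP => Pn0.
  have hsz : (size P <= M.+1)%N.
    rewrite /P; apply: (big_ind (fun p : {poly R} => (size p <= M.+1)%N)).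
    - by rewrite size_poly0.
    - by move=> p q hp hq; apply: leq_trans (size_polyD _ _) _; rewrite geq_max hp hq.
    - move=> j _; apply: leq_trans (size_scale_leq _ _) _.
      by apply: leq_trans (size_prim _) _; rewrite ltnS size_lpoly.
  have := @max_poly_roots _ P (0 :: [seq tau m | m <- enum 'I_M]) Pn0.
  have -> : all (root P) (0 :: [seq tau m | m <- enum 'I_M]).
    rewrite /= rootE /P horner_sum big1 ?eqxx /=; last by move=> j _; rewrite hornerZ prim0 mulr0.
    apply/allP => z /mapP [m _ ->]; rewrite rootE horner_sum; apply/eqP; rewrite -[RHS](hm m).
    by apply: eq_bigr => j _; rewrite hornerZ colloc_entry.
  have -> : uniq (0 :: [seq tau m | m <- enum 'I_M]).
    rewrite /= map_inj_uniq ?enum_uniq ?andbT; last exact: tau_inj.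
    apply/mapP => [[m _ e]]; have := radau_pos Htau m; rewrite -e ltxx //.
  move=> /(_ isT isT); rewrite /= size_map size_enum_ord => h.
  by have := leq_trans h hsz; rewrite ltnn.
have dP : \sum_j v 0 j *: lpoly j = 0.
  transitivity (P^`()); last by rewrite P0 deriv0.
  by rewrite /P raddf_sum; apply: eq_bigr => j _; rewrite [RHS]derivZ deriv_prim.
move: v0; suff -> : v = 0 by rewrite eqxx.
apply/matrixP => i k; rewrite ord1 mxE.
transitivity ((\sum_j v 0 j *: lpoly j).[tau k]); last by rewrite dP horner0.
rewrite horner_sum (bigD1 k) //= big1 ?addr0.
  by rewrite hornerZ lpolyE lag_delta eqxx mulr1.
by move=> l kj; rewrite hornerZ lpolyE lag_delta eq_sym (negbTE kj) mulr0.
Qed.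

End Colloc.

Lemma unit0 (R : realType) k (A : 'M[R[i]]_k) : k = 0%N -> A \in unitmx.
Proof.
move=> k0; apply: unit_of_inj => y _; apply/matrixP => i j.
by have := ltn_ord i; rewrite {2}k0.
Qed.

Lemma tens_unit (R : realType) m n (A : 'M[R[i]]_m) (B : 'M[R[i]]_n) :
  A \in unitmx -> B \in unitmx -> (A *t B) \in unitmx.
Proof.
move=> uA uB.
have [m0|m0] := eqVneq m 0%N; first by apply: unit0; rewrite m0 mul0n.
have [n0|n0] := eqVneq n 0%N; first by apply: unit0; rewrite n0 muln0.
exact: tensmx_unit.
Qed.

Lemma cmx_unit (R : realType) k (Q : 'M[R]_k) : Q \in unitmx -> cmx Q \in unitmx.
Proof. by move=> uQ; rewrite /cmx map_unitmx. Qed.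

Lemma cmx1 (R : realType) k : cmx (1%:M : 'M[R]_k) = 1%:M.
Proof. by rewrite /cmx map_mx1. Qed.

Theorem lemma3 (R : realType) (L M N Mt Nt : nat)
  (tau : 'I_M -> R) (QD : 'M[R]_Mt)
  (A : 'M[R[i]]_N) (At : 'M[R[i]]_Nt)
  (TQFC : 'M[R]_(Mt, M)) (TAFC : 'M[R]_(Nt, N))
  (TQCF : 'M[R]_(M, Mt)) (TACF : 'M[R]_(N, Nt))
  (nu : 'cV[R[i]]_(L * M * N) -> R) :
  (0 < L)%N -> (0 < M)%N -> (0 < N)%N ->
  (Mt <= M)%N -> (Nt <= N)%N ->
  right_radau_nodes tau ->
  is_trig_mx QD -> QD \in unitmx ->
  A \in unitmx -> At \in unitmx ->
  EH R L Mt Nt *m transfer L TQFC TAFC = transfer L TQFC TAFC *m EH R L M N ->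
  is_vnorm nu ->
  exists mustar c : R, 0 < mustar /\ 0 < c /\
    forall mu : R, mustar <= mu ->
      C_op L mu (colloc_Q tau) A \in unitmx /\
      C_op L mu QD At \in unitmx /\
      induced_norm nu
        (invmx (C_op L mu (colloc_Q tau) A)
         - transfer L TQCF TACF *m invmx (C_op L mu QD At)
             *m transfer L TQFC TAFC)
      <= c / mu.
Proof.
move=> L0 M0 N0 _ _ Hrad _ uQD uA uAt _ Hnu.
have uQ := colloc_unit Hrad.
have CE : forall k1 k2 (mu : R) (Q : 'M[R]_k1) (A1 : 'M[R[i]]_k2),
    C_op L mu Q A1 = (1%:M - EH R L k1 k2)
       - (real_complex R mu) *: ((cmx (1%:M : 'M[R]_L) *t cmx Q) *t A1).
  by move=> k1 k2 mu Q A1; rewrite /C_op addrAC.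
have uK1 : ((cmx (1%:M : 'M[R]_L) *t cmx (colloc_Q tau)) *t A) \in unitmx.
  by do 2 (apply: tens_unit => //); apply: cmx_unit => //; exact: unitmx1.
have uK2 : ((cmx (1%:M : 'M[R]_L) *t cmx QD) *t At) \in unitmx.
  by do 2 (apply: tens_unit => //); apply: cmx_unit => //; exact: unitmx1.
have [mu1 [c1 [mu10 [c10 H1]]]] := stiff (1%:M - EH R L M N) uK1.
have [mu2 [c2 [mu20 [c20 H2]]]] := stiff (1%:M - EH R L Mt Nt) uK2.
have [e1 e10 He1] := nu_upper Hnu.
have [e2 e20 He2] := nu_lower Hnu.
set T1 := transfer L TQCF TACF; set T2 := transfer L TQFC TAFC.
set Kc := c1 + mn T1 * c2 * mn T2.
have Kc0 : 0 < Kc by rewrite ltr_pwDl // mulr_ge0 ?mn_ge0 // mulr_ge0 ?mn_ge0 // ltW.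
exists (mu1 + mu2), (e1 * Kc * e2); split; first by rewrite addr_gt0.
split; first by rewrite !mulr_gt0.
move=> mu hmu.
have hmu1 : mu1 <= mu by lra.
have hmu2 : mu2 <= mu by lra.
have mu0 : 0 < mu by lra.
have [uC1 HC1] := H1 mu hmu1.
have [uC2 HC2] := H2 mu hmu2.
rewrite !CE; split => //; split => //.
set X := _ - _.
have Hsv : forall x, sv (X *m x) <= Kc / mu * sv x.
  move=> x; rewrite /X mulmxBl -!mulmxA.
  apply: le_trans (svB _ _) _.
  have h1 := HC1 x.
  have h2 : sv (T1 *m (invmx (1%:M - EH R L Mt Nt - real_complex R mu *: ((cmx 1%:M *t cmx QD) *t At)) *m (T2 *m x)))
      <= mn T1 * (c2 / mu * (mn T2 * sv x)).
    apply: le_trans (sv_mul _ _) _; apply: ler_wpM2l; first exact: mn_ge0.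
    apply: le_trans (HC2 _) _; apply: ler_wpM2l; first by rewrite divr_ge0 // ltW.
    exact: sv_mul.
  apply: le_trans (lerD h1 h2) _.
  by rewrite le_eqVlt; apply/orP; left; apply/eqP; rewrite /Kc; field; rewrite gt_eqF.
rewrite /induced_norm; apply: ge_sup.
  exists (nu (X *m const_mx 1) / nu (const_mx 1)); exists (const_mx 1) => //=.
  apply/eqP => /matrixP /(_ (Ordinal (n := L * M * N) (m := 0) (ltac:(by rewrite !muln_gt0 L0 M0 N0))) 0).
  by rewrite !mxE => /eqP; rewrite oner_eq0.
move=> _ [x x0 <-].
have nx0 : 0 < nu x.
  rewrite lt_def (nu_ge0 Hnu) andbT; apply/eqP => /(nu_eq0 Hnu) xx.
  by move: x0; rewrite /= xx eqxx.
rewrite ler_pdivrMr //.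
apply: le_trans (He1 _) _.
apply: le_trans (ler_wpM2l (ltW e10) (Hsv x)) _.
apply: le_trans (ler_wpM2l (ltW e10) (ler_wpM2l _ (He2 x))) _.
  by rewrite divr_ge0 // ltW.
by rewrite le_eqVlt; apply/orP; left; apply/eqP; field; rewrite gt_eqF.
Qed.
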